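(* Let $n,m\ge 0$ and let $k_1\ge\dots\ge k_n\ge 0$ and $l_1\ge\dots\ge l_m\ge 0$ be integers. If \[ \prod_{i=1}^n\left(5\cdot\left(\tfrac32\right)^{k_i-1}\left(2^{2k_i-1}+1\right)\right)=\prod_{j=1}^m\left(5\cdot\left(\tfrac32\right)^{l_j-1}\left(2^{2l_j-1}+1\right)\right) \] as rational numbers, then $n=m$ and $(k_1,\dots,k_n)=(l_1,\dots,l_m)$. *)

(* Defs.v *)
From HB Require Import structures.
From mathcomp Require Import all_boot all_order all_algebra.
Set Implicit Arguments. Unset Strict Implicit. Unset Printing Implicit Defensive.
Import Order.TTheory GRing.Theory Num.Theory.
Local Open Scope ring_scope.

(* f(k) = 5 * (3/2)^(k-1) * (2^(2k-1) + 1), exponents taken in int so that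
   k = 0 gives (3/2)^(-1) and 2^(-1), as rational numbers. *)
Definition factor (k : nat) : rat :=
  5 * (3%:Q / 2%:Q) ^ (k%:Z - 1) * ((2%:Q) ^ (2 * k%:Z - 1) + 1).

(* Main.v *)
Require Import Defs.
From mathcomp Require Import all_boot all_order all_algebra.
From mathcomp Require Import algC cyclotomic.
From mathcomp Require Import zify ring lra.
From Stdlib Require Import Classical.
Import Order.TTheory GRing.Theory Num.Theory.
Set Implicit Arguments. Unset Strict Implicit. Unset Printing Implicit Defensive.

Section Part0.

Definition CC (d : nat) : nat := `|(('Phi_d).[2%:Z])%R|%N.

Lemma absz_prod (I : Type) (r : seq I) (P : pred I) (F : I -> int) :
  `|(\prod_(i <- r | P i) F i)%R|%N = \prod_(i <- r | P i) `|F i|%N.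
Proof. by apply: (big_morph (fun x : int => `|x|%N)) => //; exact: abszM. Qed.

Lemma prodCC n : 0 < n -> \prod_(d <- divisors n) CC d = 2 ^ n - 1.
Proof.
move=> n0; rewrite /CC -absz_prod -horner_prod prod_Cyclotomic //.
rewrite hornerD hornerN hornerXn hornerC.
have h : (1 <= 2 ^ n)%N by rewrite expn_gt0.
have -> : (2%Z ^+ n - 1)%R = ((2^n - 1)%N : int) by rewrite -subzn // -[in RHS]natz natrX.
by [].
Qed.
Local Open Scope ring_scope.

Lemma keyineq (w : algC) : w * w^* = 1 ->
  4 <= (2 - w) * (2 - w)^* * ((2 + w ^+ 2) * (2 + w ^+ 2)^*).
Proof.
move=> hw; set u := w^* in hw *.
have ->: (2 - w)^* = 2 - u by rewrite rmorphB /= rmorph_nat.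
have ->: (2 + w ^+ 2)^* = 2 + u ^+ 2 by rewrite rmorphD rmorphXn /= rmorph_nat.
set t := w + u.
have e1 : (2 - w) * (2 - u) = 4 - 2 * t + w * u by rewrite /t; ring.
have e2 : (2 + w ^+ 2) * (2 + u ^+ 2) = 4 + 2 * (t ^+ 2 - 2 * (w * u)) + (w * u) ^+ 2
  by rewrite /t; ring.
rewrite e1 e2 hw.
have tR : t^* = t by rewrite /t rmorphD /= conjCK addrC.
have s0 : 0 <= 2 - t.
  have -> : 2 - t = (1 - w) * (1 - w)^*.
    rewrite rmorphB /= rmorph1 -/u.
    have -> : (1 - w) * (1 - u) = 1 - t + w * u by rewrite /t; ring.
    by rewrite hw; ring.
  exact: mul_conjC_ge0.
have sq (x : algC) : x^* = x -> 0 <= x * x.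
  by move=> hx; rewrite -{2}hx mul_conjC_ge0.
have h1 : 0 <= (1 - t) * (1 - t) by apply: sq; rewrite rmorphB /= rmorph1 tR.
have h2 : 0 <= t * t by apply: sq.
have h3 : 0 <= 4 * (t * t) * (2 - t) by rewrite mulr_ge0 // mulr_ge0.
have -> : (4 - 2 * t + 1) * (4 + 2 * (t ^+ 2 - 2 * 1) + 1 ^+ 2) =
   4 + ((1 - t) * (1 - t) + t * t + 4 * (t * t) * (2 - t)) by ring.
by rewrite lerDl addr_ge0 // addr_ge0.
Qed.

Lemma CC_bound a : odd a -> (1 < a)%N -> (4 ^ totient a.*2 <= CC a.*2 ^ 4)%N.
Proof.
move=> oa a1; set n := a.*2.
have n0 : (0 < n)%N by rewrite /n; lia.
have [z pz] := C_prim_root_exists n0.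
set c := ('Phi_n).[2%:Z].
have hc : (c%:~R : algC) = \prod_(k < n | coprime k n) (2 - z ^+ k).
  have := horner_map (intr : {rmorphism int -> algC}) 'Phi_n 2%:Z.
  rewrite -/c => <-.
  rewrite (Cintr_Cyclotomic pz) /cyclotomic horner_prod.
  by apply: eq_bigr => k _; rewrite hornerXsubC.
have nz : `|z| = 1.
  apply/eqP; rewrite -(pexpr_eq1 n0) // -normrX (prim_expr_order pz) normr1 //.
have zz k : z ^+ k * (z ^+ k)^* = 1.
  by rewrite rmorphXn /= -exprMn -normCK nz expr1n expr1n.
have za : z ^+ a = -1.
  have : (z ^+ a) ^+ 2 == 1 by rewrite -exprM muln2 (prim_expr_order pz).
  rewrite sqrf_eq1 -(prim_order_dvd pz) /n.
  have -> : (a.*2 %| a)%N = false.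
    apply/negP => /dvdn_leq; lia.
  by move=> /eqP.
have hc2 : (c%:~R : algC) = \prod_(k < n | coprime k n) (2 + z ^+ k ^+ 2).
  rewrite hc.
  pose f e (k : 'I_n) := Ordinal (ltn_pmod (k * e) n0).
  have co_e_n : coprime (a + 2) n.
    rewrite /n -muln2 coprimeMr; apply/andP; split.
      by rewrite /coprime gcdnC gcdnDl -/(coprime a 2) coprimen2.
    by rewrite coprimen2 oddD oa.
  have injf: injective (f (a + 2)%N).
    apply: can_inj (f (egcdn (a + 2) n).1) _ => k; apply: val_inj => /=.
    rewrite modnMml -mulnA -modnMmr.
    have := chinese_modr co_e_n 0 1; rewrite /chinese mul0n add0n mul1n => ->.
    by rewrite modnMmr muln1 modn_small.
  rewrite (reindex_inj injf); apply: eq_big => k /=.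
    by rewrite coprime_modl coprimeMl co_e_n andbT.
  move=> ck; rewrite (prim_expr_mod pz) mulnDr exprD mulnC exprM za.
  have ok : odd k.
    move: ck; rewrite coprime_modl coprimeMl => /andP[ck _].
    have d2 : (2 %| n)%N by rewrite /n -muln2 dvdn_mull.
    by rewrite -coprimen2 (coprime_dvdr d2 ck).
  by rewrite -signr_odd ok expr1 mulN1r opprK exprM.
have cc : (c%:~R : algC)^* = c%:~R by rewrite rmorph_int.
have c4 : (c%:~R : algC) ^+ 4 = \prod_(k < n | coprime k n)
    ((2 - z ^+ k) * (2 - z ^+ k)^* * ((2 + z ^+ k ^+ 2) * (2 + z ^+ k ^+ 2)^*)).
  rewrite big_split /= big_split /= big_split /= -!rmorph_prod /= -hc -hc2 cc.
  by rewrite -!expr2 -exprM.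
have hle : (4 : algC) ^+ totient n <= (c%:~R : algC) ^+ 4.
  rewrite c4.
  have -> : totient n = #|[pred k : 'I_n | coprime k n]|.
    rewrite totient_count_coprime big_mkord -sum1_card.
    by rewrite [RHS]big_mkcond; apply: eq_bigr => i _; rewrite inE coprime_sym; case: coprime.
  rewrite -prodr_const; apply: ler_prod => k ck.
  by rewrite ler0n /=; apply: keyineq; apply: zz.
have h1 : ((4 ^ totient n)%N : int) <= c ^+ 4.
  rewrite -(ler_int algC) rmorphXn /=.
  by rewrite -[((4 ^ totient n)%N : int)%:~R]/((4 ^ totient n)%N%:R) natrX.
rewrite /CC -/c -lez_nat.
have -> : ((`|c| ^ 4)%N : int) = c ^+ 4.
  rewrite -[in RHS](ger0_norm (_ : 0 <= c ^+ 4)); last by rewrite -[4%N]/(2*2)%N exprM sqr_ge0.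
  by rewrite normrX -abszE -natz natrX natz.
exact: h1.
Qed.

End Part0.

Section Part1.

Lemma mulsub1 A B : 0 < A -> 0 < B -> A * B - 1 = A * (B - 1) + (A - 1).
Proof.
move=> hA hB; rewrite mulnBr muln1.
have : A <= A * B by rewrite leq_pmulr.
move: (A * B) => P; lia.
Qed.

Definition G m k := \sum_(i < k) (2 ^ m) ^ i.

Lemma geomE m k : (2 ^ m - 1) * G m k = 2 ^ (m * k) - 1.
Proof.
rewrite /G; elim: k => [|k IH]; first by rewrite big_ord0 !muln0.
rewrite big_ord_recr /= mulnDr IH mulnS expnD -expnM mulnC (mulnC k m).
rewrite [in RHS]mulnC mulsub1 ?expn_gt0 //; lia.
Qed.

Lemma dvd_pow_sub1 m k : 2 ^ m - 1 %| 2 ^ (m * k) - 1.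
Proof. by rewrite -geomE dvdn_mulr. Qed.

Lemma dvd_gcd_pow d x y : d %| 2 ^ x - 1 -> d %| 2 ^ y - 1 -> d %| 2 ^ (gcdn x y) - 1.
Proof.
case: (posnP x) => [-> | x0]; first by rewrite gcd0n.
move=> hx hy; case: (egcdnP y x0) => km kn E _.
have h1 : d %| 2 ^ (km * x) - 1 by apply: dvdn_trans hx _; rewrite mulnC dvd_pow_sub1.
have h2 : d %| 2 ^ (kn * y) - 1 by apply: dvdn_trans hy _; rewrite mulnC dvd_pow_sub1.
rewrite E expnD [X in X - 1]mulnC mulsub1 ?expn_gt0 // in h1.
by rewrite (dvdn_addr _ (dvdn_mull _ h2)) in h1.
Qed.

Lemma CC_split n m : 0 < m -> m %| n -> m < n -> CC n %| G m (n %/ m).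
Proof.
move=> m0 mn mltn; have n0 : 0 < n by apply: leq_trans mltn.
have hP := prodCC n0; rewrite (bigID (fun d => d %| m)) /= in hP.
have e1 : \prod_(d <- divisors n | d %| m) CC d = 2 ^ m - 1.
  rewrite -big_filter -(prodCC m0); apply: perm_big; apply: uniq_perm.
  - by rewrite filter_uniq // divisors_uniq.
  - exact: divisors_uniq.
  move=> d; rewrite mem_filter -!dvdn_divisors //.
  by apply/andP/idP => [[]//|dm]; split => //; exact: dvdn_trans dm mn.
rewrite e1 in hP.
have e2 : 2 ^ n - 1 = (2 ^ m - 1) * G m (n %/ m) by rewrite geomE mulnC divnK.
have p0 : 0 < 2 ^ m - 1.
  have : 2 ^ 1 <= 2 ^ m by rewrite leq_exp2l.
  by rewrite expn1 subn_gt0.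
move: hP; rewrite e2 => /eqP; rewrite eqn_pmul2l // => /eqP <-.
have nin : n \in [seq d <- divisors n | ~~ (d %| m)].
  rewrite mem_filter -dvdn_divisors // dvdnn andbT.
  by apply/negP => /dvdn_leq => /(_ m0); rewrite leqNgt mltn.
rewrite -big_filter (bigD1_seq n nin) ?filter_uniq ?divisors_uniq //.
exact: dvdn_mulr.
Qed.

End Part1.

Section Part2.

Lemma pow1x x k : exists S, (1 + x) ^ k = 1 + k * x + x ^ 2 * S.
Proof.
elim: k => [|k [S IH]]; first by exists 0; rewrite expn0 !mul0n muln0.
exists (S + k + x * S); rewrite expnS IH; ring.
Qed.

Lemma sumpow x k : exists R, \sum_(i < k) (1 + x) ^ i = k + x * 'C(k, 2) + x ^ 2 * R.
Proof.
elim: k => [|k [R IH]]; first by exists 0; rewrite big_ord0 bin0n /= !muln0.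
have [S hS] := pow1x x k.
exists (R + S); rewrite big_ord_recr /= IH hS binS bin1; ring.
Qed.

Lemma not_sq_dvd p y : prime p -> odd p -> y = 1 %[mod p] ->
  ~~ (p ^ 2 %| \sum_(i < p) y ^ i).
Proof.
move=> pp op hy.
have p1 : 1 < p := prime_gt1 pp.
have p3 : 2 < p by case: p p1 op {pp hy} => [|[|[|]]].
have ey : y = 1 + (y %/ p) * p by rewrite {1}(divn_eq y p) hy modn_small // addnC.
set t := y %/ p in ey; rewrite ey.
have [R hR] := sumpow (t * p) p; rewrite hR.
have : p %| 'C(p, 2) by apply: prime_dvd_bin; rewrite // p3.
case/dvdnP => c ->.
have -> : p + t * p * (c * p) + (t * p) ^ 2 * R = p ^ 2 * (t * c + t ^ 2 * R) + p by ring.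
rewrite (dvdn_addr _ (dvdn_mulr _ (dvdnn _))).
apply/negP => /dvdn_leq => /(_ (prime_gt0 pp)).
rewrite leqNgt -{1}(expn1 p) ltn_exp2l //.
Qed.

Lemma ineq7' k : (k + 7) ^ 4 < 4 ^ (k + 6).
Proof.
elim: k => [|k IH]; first by [].
have e : 4 * (k + 7) ^ 4 = (k.+1 + 7) ^ 4 + (3*k^4 + 80*k^3 + 792*k^2 + 3440*k + 5508) by ring.
rewrite (addSn k 6) [4 ^ _]expnS.
apply: leq_ltn_trans (_ : 4 * (k + 7) ^ 4 < _); last by rewrite ltn_pmul2l.
by rewrite e leq_addr.
Qed.

Lemma ineq7 p : 7 <= p -> p ^ 4 < 4 ^ p.-1.
Proof.
move=> h; have := ineq7' (p - 7).
by rewrite subnK // (_ : p - 7 + 6 = p.-1) //; lia.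
Qed.

Lemma ineq3' k : (k + 3) ^ 4 < 16 ^ (k + 2).
Proof.
elim: k => [|k IH]; first by [].
have e : 16 * (k + 3) ^ 4 = (k.+1 + 3) ^ 4 + (15*k^4 + 176*k^3 + 768*k^2 + 1472*k + 1040) by ring.
rewrite (addSn k 2) [16 ^ _]expnS.
apply: leq_ltn_trans (_ : 16 * (k + 3) ^ 4 < _); last by rewrite ltn_pmul2l.
by rewrite e leq_addr.
Qed.

Lemma ineq3 p : 3 <= p -> p ^ 4 < 16 ^ p.-1.
Proof.
move=> h; have := ineq3' (p - 3).
by rewrite subnK // (_ : p - 3 + 2 = p.-1) //; lia.
Qed.

Lemma phi_comp a p : prime p -> p %| a -> odd a -> a != p -> 2 * p.-1 <= totient a.
Proof.
move=> pp pa oa ap.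
have a0 : 0 < a by case: a oa {pa ap}.
have [s cps ea] := pfactor_coprime pp a0.
set e := logn p a in ea.
have e0 : 0 < e by rewrite /e logn_gt0 mem_primes pp a0 pa.
have cs : coprime s (p ^ e) by rewrite coprime_sym coprimeXl.
rewrite ea totient_coprime // totient_pfactor //.
have p1 : 1 < p := prime_gt1 pp.
have s0 : 0 < s by move: a0; rewrite ea muln_gt0 => /andP[].
case: (ltngtP s 1) => [|s1|s1].
- by rewrite ltnNge s0.
- have s2 : s != 2.
    apply/negP => /eqP s2; move: oa; rewrite ea s2 oddM //.
  have : 1 < totient s by rewrite totient_gt1; lia.
  move=> h; apply: leq_mul => //.
  by rewrite leq_pmulr // expn_gt0 ltnW.
- move: ea ap; rewrite s1 mul1n => ea ap.
  have e2 : 1 < e.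
    case: e ea e0 {cs} => [|[|e]] // ea _.
    by rewrite ea expn1 eqxx in ap.
  have -> : totient 1 = 1 by [].
  rewrite mul1n mulnC leq_mul2l; apply/orP; right.
  have p1' := p1; apply: leq_trans p1' _; rewrite -{1}(expn1 p) leq_exp2l //.
  by move: e2; case: (e) => [|[|]].
Qed.

End Part2.

Section Part3.

Lemma G_mod p m k : p %| 2 ^ m - 1 -> G m k = k %[mod p].
Proof.
move=> h.
have e : 2 ^ m = 1 %[mod p].
  by apply/eqP; rewrite eqn_mod_dvd ?expn_gt0.
rewrite /G; elim: k => [|k IH]; first by rewrite big_ord0.
rewrite big_ord_recr /= -modnDm IH -modnXm e modnXm exp1n modnDm addn1.
by [].
Qed.

Lemma G_dvd p m k : p %| 2 ^ m - 1 -> p %| G m k -> p %| k.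
Proof. by move=> h; rewrite /dvdn (G_mod k h). Qed.

Lemma G2 a : G a 2 = 2 ^ a + 1.
Proof. by rewrite /G big_ord_recr big_ord_recr big_ord0 /= expn0 expn1 add0n addnC. Qed.

Lemma dvd_sq_sub1 d b : d %| 2 ^ b + 1 -> d %| 2 ^ (b * 2) - 1.
Proof. by move=> h; rewrite -geomE G2 dvdn_mull. Qed.

Lemma CC_facts a p : odd a -> 1 < a -> prime p -> p %| CC a.*2 ->
  (exists b, [/\ odd b, b < a & p %| 2 ^ b + 1]) ->
  [/\ p %| a, forall r, prime r -> r %| a.*2 -> r <= p & ~~ (p ^ 2 %| CC a.*2)].
Proof.
move=> oa a1 pp pC [b [ob ba pb]].
set n := a.*2 in pC *.
have n0 : 0 < n by rewrite /n; clear -a1; lia.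
have an : a %| n by rewrite /n -muln2 dvdn_mulr.
have aln : a < n by rewrite /n; clear -a1; lia.
have Ca : CC n %| 2 ^ a + 1.
  have := CC_split (ltnW a1) an aln.
  by rewrite /n -muln2 mulKn ?G2 //; clear -a1; lia.
have pa1 : p %| 2 ^ a + 1 := dvdn_trans pC Ca.
have podd : odd p.
  case: (even_prime pp) => // p2; move: pa1; rewrite p2 dvdn2 oddD oddX /=.
  by case: (a) a1.
have cp2 : coprime p 2 by rewrite coprimen2.
have pn : p %| 2 ^ n - 1 by rewrite /n -muln2; exact: dvd_sq_sub1.
have pb2 := dvd_sq_sub1 pb.
set m := gcdn n (b * 2).
have pm : p %| 2 ^ m - 1 := dvd_gcd_pow pn pb2.
have m0 : 0 < m by rewrite gcdn_gt0 n0.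
have mn : m %| n := dvdn_gcdl _ _.
have mlt : m < n.
  apply: leq_ltn_trans (_ : b * 2 < n); last by rewrite /n; clear -ba; lia.
  apply: dvdn_leq; [by clear -ob; case: b ob | exact: dvdn_gcdr].
have pnm : p %| n %/ m := G_dvd pm (dvdn_trans pC (CC_split m0 mn mlt)).
have pdn : p %| n by apply: dvdn_trans pnm _; apply/dvdnP; exists m; rewrite mulnC divnK.
have pa : p %| a by move: pdn; rewrite /n -muln2 Gauss_dvdl.
have pf : p %| 2 ^ p.-1 - 1.
  have := fermat_little 2 pp => /eqP; rewrite eqn_mod_dvd; last first.
    by rewrite -{1}(expn1 2) leq_exp2l // prime_gt0.
  have -> : 2 ^ p - 2 = 2 * (2 ^ p.-1 - 1).
    by rewrite mulnBr muln1 -expnS prednK // prime_gt0.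
  by rewrite Gauss_dvdr.
set m' := gcdn n p.-1.
have pm' : p %| 2 ^ m' - 1 := dvd_gcd_pow pn pf.
have m'0 : 0 < m' by rewrite gcdn_gt0 n0.
have m'n : m' %| n := dvdn_gcdl _ _.
have p1 := prime_gt1 pp.
have m'p : m' <= p.-1.
  by apply: dvdn_leq; [rewrite -subn1 subn_gt0 | exact: dvdn_gcdr].
have aux r : prime r -> r %| n -> coprime r m' ->
    (p %| 2 ^ (n %/ r) - 1) /\ CC n %| G (n %/ r) r.
  move=> pr rn crm.
  have rm : m' %| n %/ r by rewrite dvdn_divRL // mulnC Gauss_dvd // rn m'n.
  split.
    by case/dvdnP: rm => k ->; rewrite mulnC; exact: dvdn_trans pm' (dvd_pow_sub1 _ _).
  have r1 := prime_gt1 pr.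
  have q0 : 0 < n %/ r by rewrite divn_gt0 ?prime_gt0 // dvdn_leq.
  have qn : n %/ r %| n by apply/dvdnP; exists r; rewrite mulnC divnK.
  have qlt : n %/ r < n := ltn_Pdiv r1 n0.
  have := CC_split q0 qn qlt.
  have e : n %/ (n %/ r) = r by rewrite -{1}(divnK rn) mulKn.
  by rewrite e.
have cpm : coprime p m'.
  rewrite prime_coprime //; apply/negP => /dvdn_leq => /(_ m'0) h.
  by move: (leq_trans h m'p) p1; clear; lia.
split => //.
  move=> r pr rn; rewrite leqNgt; apply/negP => pr_lt.
  have crm : coprime r m'.
    rewrite prime_coprime //; apply/negP => /dvdn_leq => /(_ m'0) h.
    by move: (leq_trans h m'p) pr_lt; clear; lia.
  have [h1 h2] := aux r pr rn crm.
  have := G_dvd h1 (dvdn_trans pC h2).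
  by rewrite dvdn_prime2 // => /eqP e; move: pr_lt; rewrite e ltnn.
have [h1 h2] := aux p pp pdn cpm.
apply/negP => hsq.
have y1 : 2 ^ (n %/ p) = 1 %[mod p].
  by apply/eqP; rewrite eqn_mod_dvd ?expn_gt0.
by move: (not_sq_dvd pp podd y1); rewrite (dvdn_trans hsq h2).
Qed.

Lemma bang a : odd a -> 7 <= a ->
  exists p, [/\ prime p, p %| 2 ^ a + 1 & forall b, odd b -> b < a -> ~~ (p %| 2 ^ b + 1)].
Proof.
move=> oa a7.
apply: NNPP => hn.
have H p : prime p -> p %| 2 ^ a + 1 -> exists b, [/\ odd b, b < a & p %| 2 ^ b + 1].
  move=> pp pd; apply: NNPP => hb; apply: hn; exists p; split => // b ob ba.
  by apply/negP => hd; apply: hb; exists b; split.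
have a1 : 1 < a by clear -a7; lia.
set n := a.*2.
have n0 : 0 < n by rewrite /n; clear -a1; lia.
have an : a %| n by rewrite /n -muln2 dvdn_mulr.
have aln : a < n by rewrite /n; clear -a1; lia.
have Ca : CC n %| 2 ^ a + 1.
  have := CC_split (ltnW a1) an aln.
  by rewrite /n -muln2 mulKn ?G2 //; clear -a1; lia.
have facts p : prime p -> p %| CC n ->
    [/\ p %| a, forall r, prime r -> r %| n -> r <= p & ~~ (p ^ 2 %| CC n)].
  by move=> pp pC; apply: CC_facts => //; apply: H => //; exact: dvdn_trans pC Ca.
have C0 : 0 < CC n.
  rewrite lt0n; apply/negP => /eqP e; move: Ca; rewrite e dvd0n addn1.
  by [].
have hb := CC_bound oa a1; rewrite -/n in hb.
have phin : totient n = totient a.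
  by rewrite /n -muln2 totient_coprime ?coprimen2 // muln1.
rewrite phin in hb.
have ta : 0 < totient a by rewrite totient_gt0; clear -a1; lia.
case: (ltngtP (CC n) 1) => [C1|C1|C1].
- by move: C0; rewrite lt0n; case: (CC n) C1.
- set p0 := pdiv (CC n).
  have pp0 : prime p0 := pdiv_prime C1.
  have p0C : p0 %| CC n := pdiv_dvd _.
  have [p0a hA hB] := facts p0 pp0 p0C.
  have Ce : CC n = p0.
    have := p0C; case/dvdnP => c ce.
    case: (ltngtP c 1) => [c0|c1|c1].
    + by move: C0 c0; rewrite ce; case: (c).
    + set q := pdiv c.
      have pq : prime q := pdiv_prime c1.
      have qC : q %| CC n by rewrite ce; apply: dvdn_mulr; exact: pdiv_dvd.
      have [qa hA' _] := facts q pq qC.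
      have e : q = p0.
        apply/eqP; rewrite eqn_leq.
        rewrite (hA q pq (dvdn_trans qa an)).
        by rewrite (hA' p0 pp0 (dvdn_trans p0a an)).
      move: hB; rewrite ce -mulnn dvdn_pmul2r ?prime_gt0 // -e.
      by rewrite pdiv_dvd.
    + by rewrite ce c1 mul1n.
  rewrite Ce in hb.
  have p0odd : odd p0.
    case: (even_prime pp0) => // e; move: p0a; rewrite e dvdn2.
    by rewrite oa.
  case: (eqVneq a p0) => [ea | nap].
    rewrite ea totient_prime // in hb.
    have := ineq7 (_ : 7 <= p0); rewrite -ea => /(_ a7).
    by rewrite ltnNge ea hb.
  have h2 := phi_comp pp0 p0a oa nap.
  have p3 : 3 <= p0.
    by move: (prime_gt1 pp0) p0odd; clear; case: p0 => [|[|[|]]].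
  have := ineq3 p3.
  rewrite ltnNge (leq_trans _ hb) //.
  by rewrite -(expnM 4 2) leq_exp2l.
- rewrite C1 exp1n in hb.
  move: hb; rewrite leqNgt; case/negP.
  by rewrite -(exp1n (totient a)) ltn_exp2r //; clear -ta; lia.
Qed.

End Part3.

Section Part4.

Definition N (k : nat) : nat :=
  if k is k'.+1 then 5 * 3 ^ k' * (2 ^ (2 * k' + 1) + 1) else 5.

Local Open Scope ring_scope.

Lemma factorE k : factor k = (N k)%:R / (2 ^ k.-1)%:R.
Proof.
rewrite /factor; case: k => [|k] /=.
  rewrite (_ : (0%:Z - 1) = -1) // (_ : (2 * 0%:Z - 1) = -1) //.
rewrite (_ : (k.+1%:Z - 1) = k%:Z); last by lia.
rewrite (_ : (2 * k.+1%:Z - 1) = (2 * k + 1)%N%:Z); last by lia.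
rewrite /= -!exprnP !natrM !natrX natrD natrX expr_div_n.
have h2 : (2 : rat) ^+ k != 0 by rewrite expf_neq0.
rewrite /=. field. exact: h2.
Qed.

Definition S (s : seq nat) : nat := \sum_(x <- s) x.-1.

Lemma prodE s : \prod_(x <- s) factor x = (\prod_(x <- s) N x)%:R / (2 ^ S s)%:R.
Proof.
rewrite /S; elim: s => [|x s IH]; first by rewrite !big_nil expn0 divr1.
rewrite !big_cons IH factorE expnD !natrM.
have h1 : ((2 ^ x.-1)%N%:R : rat) != 0 by rewrite pnatr_eq0 expn_eq0.
have h2 : ((2 ^ (\sum_(j <- s) j.-1))%N%:R : rat) != 0 by rewrite pnatr_eq0 expn_eq0.
by field; rewrite h1 h2.
Qed.

Lemma eq_nat s t : \prod_(x <- s) factor x = \prod_(x <- t) factor x ->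
  ((\prod_(x <- s) N x) * 2 ^ S t = (\prod_(x <- t) N x) * 2 ^ S s)%N.
Proof.
rewrite !prodE => /eqP; rewrite eqr_div ?pnatr_eq0 ?expn_eq0 // -!natrM eqr_nat.
by move/eqP.
Qed.

End Part4.

Section Part5.

Lemma N_odd x : odd (N x).
Proof. case: x => [|x] //=; by rewrite !oddM !oddX !oddD !oddX /= orbT addn1. Qed.

Lemma N_gt1 x : 1 < N x.
Proof.
case: x => [|x] //=; rewrite -mulnA.
have h : 0 < 3 ^ x * (2 ^ (2 * x + 1) + 1) by rewrite muln_gt0 expn_gt0 addn1.
exact: leq_trans (leq_mul (leqnn 5) h).
Qed.

Lemma four_mod j : 4 ^ j %% 5 = (if odd j then 4 else 1).
Proof.
elim: j => [|j IH] //; rewrite expnS -modnMm IH /=.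
by case: (odd j).
Qed.

Lemma five j : ~~ (5 %| 2 ^ (2 * j + 1) + 1).
Proof.
rewrite /dvdn expnD expnM expn1 -modnDm -modnMm four_mod.
by case: (odd j).
Qed.

Lemma prim a : odd a -> 5 <= a ->
  exists p, [/\ prime p, p %| 2 ^ a + 1 & forall b, odd b -> b < a -> ~~ (p %| 2 ^ b + 1)].
Proof.
move=> oa a5; case: (ltnP a 7) => a7; last exact: bang.
have -> : a = 5 by move: oa a5 a7; clear; case: a => [|[|[|[|[|[|[|]]]]]]].
exists 11; split => // b ob b5.
by move: ob b5; case: b => [|[|[|[|[|]]]]].
Qed.

Lemma prod_oddN s : odd (\prod_(x <- s) N x).
Proof.
elim: s => [|x s IH]; first by rewrite big_nil.
by rewrite big_cons oddM N_odd IH.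
Qed.

Lemma odd_pow2 s : odd (2 ^ s) -> s = 0.
Proof. by rewrite oddX /=; case: s. Qed.

Lemma contra x k l : all (fun y => y < x) l ->
  (\prod_(z <- x :: k) N z) * 2 ^ S l = (\prod_(y <- l) N y) * 2 ^ S (x :: k) -> False.
Proof.
move=> hl e.
case: l hl e => [|y0 l'] hl e.
  rewrite big_nil /S big_nil expn0 muln1 mul1n in e.
  have od := prod_oddN (x :: k); rewrite e in od.
  move: e; rewrite (odd_pow2 od) expn0 big_cons => e.
  have := N_gt1 x; have : N x %| 1 by rewrite -e dvdn_mulr.
  by rewrite dvdn1 => /eqP ->.
set l := y0 :: l' in hl e *.
case: x hl e => [|[|[|x']]] hl e.
- by move: hl; rewrite /l /=.
-
  have : 3 %| (\prod_(y <- l) N y) * 2 ^ S (1 :: k).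
    rewrite -e big_cons -!mulnA; apply: dvdn_mull; apply: dvdn_mull; exact: dvdn_mulr.
  rewrite Euclid_dvdM // => /orP[|h]; last first.
    by move: h; rewrite (Euclid_dvdX _ _ (isT : prime 3)).
  rewrite (Euclid_dvd_prod _ _ _ (isT : prime 3)) big_has.
  case/hasP => y yl; move/allP: hl => /(_ y yl); rewrite ltnS leqn0 => /eqP -> //.
-
  have S0 : S l = 0.
    rewrite /S big1_seq // => y /andP[_ yl]; move/allP: hl => /(_ y yl).
    by case: y {yl} => [|[|]].
  move: e; rewrite S0 expn0 muln1 => e.
  have := prod_oddN (2 :: k); rewrite e oddM oddX /= /S big_cons /=.
  by rewrite andbF.
-
  set a := 2 * x'.+2 + 1.
  have oa : odd a by rewrite /a oddD oddM.
  have a5 : 5 <= a by rewrite /a; clear; lia.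
  have [p [pp pa hb]] := prim oa a5.
  have pN : p %| N x'.+3 by rewrite /= dvdn_mull.
  have : p %| (\prod_(y <- l) N y) * 2 ^ S (x'.+3 :: k).
    by rewrite -e big_cons -mulnA dvdn_mulr.
  rewrite Euclid_dvdM // Euclid_dvdX //.
  have p2 : ~~ (p %| 2).
    rewrite dvdn_prime2 //; apply/negP => /eqP p2; move: pa.
    by rewrite p2 dvdn2 oddD oddX /=.
  rewrite (negbTE p2) /= orbF Euclid_dvd_prod // big_has.
  case/hasP => y yl; move/allP: hl => /(_ y yl) yx.
  case: y yx {yl} => [|y'] yx.
    rewrite /= dvdn_prime2 // => /eqP p5; move: pa; rewrite p5.
    by move=> h; move: (five x'.+2); rewrite -/a h.
  rewrite /= Euclid_dvdM // Euclid_dvdM // Euclid_dvdX // => /orP[/orP[]|].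
  + rewrite dvdn_prime2 // => /eqP p5; move: pa; rewrite p5.
    by move=> h; move: (five x'.+2); rewrite -/a h.
  + rewrite dvdn_prime2 // => /andP[/eqP p3 _].
    have h1a : 1 < a by rewrite /a; clear; lia.
    by move: (hb 1 isT h1a); rewrite p3.
  + move=> h.
    have ob : odd (2 * y' + 1) by rewrite oddD oddM.
    have ba : 2 * y' + 1 < a by rewrite /a; clear -yx; lia.
    by move: (hb _ ob ba); rewrite h.
Qed.

Lemma geq_trans' : transitive geq.
Proof. by move=> a b c /= h1 h2; exact: leq_trans h2 h1. Qed.

Lemma all_lt x y l : y < x -> path geq y l -> all (fun z => z < x) (y :: l).
Proof.
move=> yx p; rewrite /= yx /=.
apply/allP => z zl; move/allP: (order_path_min geq_trans' p) => /(_ z zl) /= zy.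
exact: leq_ltn_trans zy yx.
Qed.

Local Open Scope ring_scope.

Lemma factor_neq0 x : factor x != 0%R.
Proof.
rewrite factorE GRing.mulf_neq0 // ?GRing.invr_eq0 Num.Theory.pnatr_eq0 ?expn_eq0 //.
by rewrite -lt0n (ltn_trans _ (N_gt1 x)).
Qed.


End Part5.

Local Open Scope ring_scope.

Theorem lemma5 (k l : seq nat) :
  sorted geq k -> sorted geq l ->
  \prod_(x <- k) factor x = \prod_(y <- l) factor y ->
  size k = size l /\ k = l.
Proof.
suff H : forall k l : seq nat, sorted geq k -> sorted geq l ->
    \prod_(x <- k) factor x = \prod_(y <- l) factor y -> k = l.
  by move=> sk sl e; rewrite (H k l sk sl e).
clear k l; elim=> [|x k IH] [|y l] //= sk sl e.
- exfalso; apply: (@contra y l [::]) => //.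
  by move/esym: (eq_nat e).
- by exfalso; apply: (@contra x k [::]) => //; exact: eq_nat e.
case: (ltngtP x y) => [xy|yx|exy].
- exfalso; apply: (@contra y l (x :: k)); first exact: all_lt xy sk.
  by move/esym: (eq_nat e).
- exfalso; apply: (@contra x k (y :: l)); first exact: all_lt yx sl.
  exact: eq_nat e.
- move: e; rewrite exy !big_cons => /(GRing.mulfI (factor_neq0 y)) e.
  by rewrite (IH l (path_sorted sk) (path_sorted sl) e).
Qed.
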